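(* Let $l\ge2$, $a=(a_1,\dots,a_l)$ with all $a_i>0$, and $b=(b_1,\dots,b_l)$ with all $b_i\neq0$, the $b_i$ pairwise distinct, and $b_{i_1}b_{j_1}<0$ for some $i_1\ne j_1$. Let $\bar s(l,a,b)\in\{1,2,\dots\}\cup\{\infty\}$ be the minimal integer $s\ge1$ such that the system $$\sum_{i=1}^l a_ib_i^uc_i^{u+1}=0,\qquad u=0,1,\dots,s,$$ has no real solution $(c_1,\dots,c_l)$ with at least one $c_i\neq0$ ($\bar s=\infty$ if no such $s$ exists). Then: (a) if $\sum_{i\in I}a_i\prod_{j\in I\setminus\{i\}}b_j\neq0$ for every subset $I\subseteq\{1,\dots,l\}$ with $|I|\ge2$, then $\bar s(l,a,b)\le l-1$; (b) if $\sum_{i\in I}a_i\prod_{j\in I\setminus\{i\}}b_j=0$ for some subset $I$ with $|I|\ge2$, then $\bar s(l,a,b)=\infty$; (c) under the hypothesis of (a): if $l=2$ then $\bar s(l,a,b)=1$; if $l=3$ and $\sum_{i=1}^3a_i\prod_{j\neq i}b_j>0$ then $\bar s(l,a,b)=1$, while if $l=3$ and $\sum_{i=1}^3a_i\prod_{j\neq i}b_j<0$ then $\bar s(l,a,b)=2$. *)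

(* Defs.v *)
(* The reals are modelled by an arbitrary real closed field R. *)
From HB Require Import structures.
From mathcomp Require Import all_boot all_order all_algebra.
From Stdlib Require Import ClassicalEpsilon.
Set Implicit Arguments. Unset Strict Implicit. Unset Printing Implicit Defensive.
Import Order.TTheory GRing.Theory Num.Theory.
Local Open Scope ring_scope.

Definition no_nontriv_sol (R : rcfType) (l : nat) (a b : 'I_l -> R) (s : nat)
  : Prop :=
  ~ exists c : 'I_l -> R,
      (exists i, c i != 0) /\
      forall u : nat, (u <= s)%N ->
        \sum_(i < l) a i * b i ^+ u * c i ^+ u.+1 = 0.

(* Characterisation of sbar: Some s = minimal s >= 1 with no nontrivial
   solution; None = infinity (no such s). *)
Definition sbar_spec (R : rcfType) (l : nat) (a b : 'I_l -> R)
  (o : option nat) : Prop :=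
  match o with
  | Some s => (1 <= s)%N /\ no_nontriv_sol a b s /\
              forall t, (1 <= t)%N -> (t < s)%N -> ~ no_nontriv_sol a b t
  | None => forall s, (1 <= s)%N -> ~ no_nontriv_sol a b s
  end.

Definition sbar (R : rcfType) (l : nat) (a b : 'I_l -> R) : option nat :=
  epsilon (inhabits None) (sbar_spec a b).

Definition sigmaI (R : rcfType) (l : nat) (a b : 'I_l -> R) (I : {set 'I_l})
  : R :=
  \sum_(i in I) a i * \prod_(j in I | j != i) b j.

(* Main.v *)
Require Import Defs.
From HB Require Import structures.
From mathcomp Require Import all_boot all_order all_algebra.
From mathcomp Require Import ring lra zify.
From Stdlib Require Import ClassicalEpsilon Classical.
Import Order.TTheory GRing.Theory Num.Theory.
Local Open Scope ring_scope.

Lemma vand_key (R : fieldType) (l : nat) (e d : 'I_l -> R) (i0 : 'I_l) :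
 (forall u, (u <= l.-1)%N -> \sum_(i < l) e i * d i ^+ u = 0) ->
 \sum_(i < l | d i == d i0) e i = 0.
Proof.
move=> H.
set v := d i0.
pose p := \prod_(j < l | d j != v) ('X - (d j)%:P).
have sp : (size p <= l)%N.
  rewrite /p -big_filter size_prod_XsubC size_filter.
  have h1 := count_predC (fun j => d j != v) (index_enum 'I_l).
  have h2 : (0 < count (predC (fun j => d j != v)) (index_enum 'I_l))%N.
    rewrite -has_count; apply/hasP; exists i0; first exact: mem_index_enum.
    by rewrite /= negbK.
  have h3 : size (index_enum 'I_l) = l by rewrite -[RHS]card_ord cardE /enum_mem size_filter count_predT.
  rewrite -[X in (_ < X)%N]h3 -h1. by rewrite -[X in (X < _)%N]addn0 ltn_add2l.
have H0 : \sum_(i < l) e i * p.[d i] = 0.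
  transitivity (\sum_(i < l) \sum_(k < l) p`_k * (e i * d i ^+ k)).
    apply: eq_bigr => i _; rewrite (horner_coef_wide _ sp) mulr_sumr.
    by apply: eq_bigr => k _; rewrite mulrCA.
  rewrite exchange_big /= big1 // => k _.
  rewrite -mulr_sumr H ?mulr0 //.
  have := ltn_ord k; lia.
rewrite (bigID (fun i => d i == v)) /= in H0.
rewrite [X in _ + X]big1 ?addr0 in H0; last first.
  move=> i hi; rewrite /p horner_prod (bigD1 i) //= hornerXsubC subrr mul0r mulr0 //.
have pv : p.[v] != 0.
  rewrite /p horner_prod; apply/prodf_neq0 => j hj.
  by rewrite hornerXsubC subr_eq0 eq_sym.
move: H0; rewrite (eq_bigr (fun i => e i * p.[v])); last by move=> i /eqP ->.
by rewrite -mulr_suml => /eqP; rewrite mulf_eq0 (negbTE pv) orbF => /eqP.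
Qed.

Lemma sigmaI_E (R : rcfType) (l : nat) (a b : 'I_l -> R) (I : {set 'I_l}) :
  (forall i, b i != 0) ->
  sigmaI a b I = (\prod_(j in I) b j) * \sum_(i in I) a i / b i.
Proof.
move=> hb; rewrite /sigmaI mulr_sumr; apply: eq_bigr => i iI.
by rewrite [in RHS](bigD1 i) //= [RHS]mulrC mulrA divfK.
Qed.

Lemma spec_unique (R : rcfType) (l : nat) (a b : 'I_l -> R) o1 o2 :
  sbar_spec a b o1 -> sbar_spec a b o2 -> o1 = o2.
Proof.
case: o1 => [s1|]; case: o2 => [s2|] //=.
- move=> [h1 [n1 m1]] [h2 [n2 m2]]; congr Some.
  case: (ltngtP s1 s2) => // h.
  + by case: (m2 s1 h1 h).
  + by case: (m1 s2 h2 h).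
- by move=> [h1 [n1 _]] H; case: (H s1 h1).
- by move=> H [h1 [n1 _]]; case: (H s2 h1).
Qed.

Lemma sbar_eq (R : rcfType) (l : nat) (a b : 'I_l -> R) o :
  sbar_spec a b o -> sbar a b = o.
Proof.
move=> h; apply: (@spec_unique R l a b (sbar a b) o _ h); rewrite /sbar.
by apply: epsilon_spec; exists o.
Qed.

Lemma min_ex (P : nat -> Prop) n : P n ->
  exists m, (m <= n)%N /\ P m /\ forall t, (t < m)%N -> ~ P t.
Proof.
elim: n {-2}n (leqnn n) => [|n IH] k hk hP.
  exists k; split => //; split => // t; move: hk; rewrite leqn0 => /eqP ->.
  by [].
case: (classic (exists t, (t < k)%N /\ P t)) => [[t [ht Pt]]|hn].
  have [m [hm [Pm mm]]] := IH t (leq_trans (ht : (t < k)%N) hk : (t <= n)%N) Pt.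
  by exists m; split => //; apply: leq_trans hm (ltnW ht).
exists k; split => //; split => // t ht Pt; apply: hn; by exists t.
Qed.

Lemma noSol (R : rcfType) (l : nat) (a b : 'I_l -> R)
  (ha : forall i, 0 < a i) (hb0 : forall i, b i != 0) :
  (forall I : {set 'I_l}, (2 <= #|I|)%N -> sigmaI a b I != 0) ->
  no_nontriv_sol a b l.-1.
Proof.
move=> hyp [c [[i0 hc] hs]].
have key := @vand_key R l (fun i => a i * c i) (fun i => b i * c i) i0.
have {key} key : \sum_(i < l | b i * c i == b i0 * c i0) a i * c i = 0.
  apply: key => u hu; rewrite -[RHS](hs u hu); apply: eq_bigr => i _.
  rewrite exprMn exprS; ring.
set v := b i0 * c i0.
have v0 : v != 0 by rewrite mulf_neq0.
have ha0 : forall i, a i != 0 by move=> i; rewrite gt_eqF.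
set I := [set i | b i * c i == v].
have Hsum : \sum_(i in I) a i / b i = 0.
  have : v * \sum_(i in I) a i / b i = 0.
    rewrite mulr_sumr -[RHS]key; apply: eq_big => i; first by rewrite inE.
    rewrite inE => /eqP hi.
    have -> : c i = v / b i by rewrite -hi; field; exact: hb0.
    field; exact: hb0.
  by move/eqP; rewrite mulf_eq0 (negbTE v0) => /eqP.
have i0I : i0 \in I by rewrite inE.
have card : (1 < #|I|)%N.
  rewrite ltnNge; apply/negP => /card_le1_eqP h.
  move: Hsum; rewrite (bigD1 i0) //= big1 ?addr0.
    by move/eqP; rewrite mulf_eq0 invr_eq0 (negbTE (ha0 i0)) (negbTE (hb0 i0)).
  move=> i /andP [iI ni]; case/negP: ni; apply/eqP; exact: h.
by move: (hyp I card); rewrite sigmaI_E // Hsum mulr0 eqxx.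
Qed.
Lemma alg3pos (R : realFieldType) (a0 a1 a2 b0 b1 b2 c0 c1 c2 : R) :
  0 < a0 -> 0 < a1 -> 0 < a2 ->
  0 < a0*b1*b2 + a1*b0*b2 + a2*b0*b1 ->
  a0*c0 + a1*c1 + a2*c2 = 0 ->
  a0*b0*c0^+2 + a1*b1*c1^+2 + a2*b2*c2^+2 = 0 ->
  [/\ c0 = 0, c1 = 0 & c2 = 0].
Proof.
move=> h0 h1 h2 hS E0 E1.
have n0 : a0 != 0 by rewrite gt_eqF.
have n1 : a1 != 0 by rewrite gt_eqF.
have n2 : a2 != 0 by rewrite gt_eqF.
set S := a0*b1*b2 + a1*b0*b2 + a2*b0*b1 in hS.
set x := a0 * c0; set y := a1 * c1.
set al := a1*a2*b0 + a0*a1*b2; set be := a0*a1*b2; set ga := a0*a2*b1 + a0*a1*b2.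
set K := a0*a1*a2*S.
have hK : 0 < K by rewrite /K !mulr_gt0.
have hc2 : c2 = -(x+y)/a2.
  have e : a2*c2 = -(x+y).
    rewrite /x /y; apply/eqP; rewrite -subr_eq0 -[X in _ == X]E0; apply/eqP; ring.
  by rewrite -e mulrC mulKf.
have key : (al*x+be*y)^+2 + K*y^+2 = al * (a0*a1*a2*(a0*b0*c0^+2 + a1*b1*c1^+2 + a2*b2*c2^+2)).
  rewrite hc2 /x /y /al /be /K /S; field; exact: n2.
rewrite E1 !mulr0 in key.
move/eqP: key; rewrite paddr_eq0; last 2 first.
- exact: sqr_ge0.
- exact: mulr_ge0 (ltW hK) (sqr_ge0 _).
move=> /andP [/eqP e1 /eqP e2].
have y0 : y = 0.
  by move/eqP: e2; rewrite mulf_eq0 (gt_eqF hK) /= sqrf_eq0 => /eqP.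
have al0 : al != 0.
  apply/eqP => al0.
  have : al * ga = be^+2 + K by rewrite /al /ga /be /K /S; ring.
  rewrite al0 mul0r => h; have : 0 < be^+2 + K by rewrite ltr_wpDl ?sqr_ge0.
  by rewrite -h ltxx.
have x0 : x = 0.
  move/eqP: e1; rewrite y0 mulr0 addr0 sqrf_eq0 mulf_eq0 (negbTE al0) /=.
  by move/eqP.
have cc0 : c0 = 0 by move/eqP: x0; rewrite mulf_eq0 (negbTE n0) => /eqP.
have cc1 : c1 = 0 by move/eqP: y0; rewrite mulf_eq0 (negbTE n1) => /eqP.
split => //; rewrite hc2 -/x -/y x0 y0; field; exact: n2.
Qed.

Lemma alg3neg (R : rcfType) (a0 a1 a2 b0 b1 b2 : R) :
  0 < a0 -> 0 < a1 -> 0 < a2 ->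
  a0*b2 + a2*b0 != 0 ->
  a0*b1*b2 + a1*b0*b2 + a2*b0*b1 < 0 ->
  exists x : R,
  a0*b0*(x/a0)^+2 + a1*b1*(1/a1)^+2 + a2*b2*(-(x+1)/a2)^+2 = 0.
Proof.
move=> h0 h1 h2 h02 hS.
have n0 : a0 != 0 by rewrite gt_eqF.
have n1 : a1 != 0 by rewrite gt_eqF.
have n2 : a2 != 0 by rewrite gt_eqF.
set S := a0*b1*b2 + a1*b0*b2 + a2*b0*b1 in hS.
set al := a1*a2*b0 + a0*a1*b2; set be := a0*a1*b2; set ga := a0*a2*b1 + a0*a1*b2.
set D := be^+2 - al*ga.
have hD : D = - (a0*a1*a2*S) by rewrite /D /al /be /ga /S; ring.
have D0 : 0 <= D by rewrite hD oppr_ge0 ltW // pmulr_rlt0 ?mulr_gt0.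
have al0 : al != 0.
  have -> : al = a1*(a0*b2+a2*b0) by rewrite /al; ring.
  by rewrite mulf_neq0.
set s := Num.sqrt D.
have s2 : s^+2 = D by rewrite sqr_sqrtr.
exists ((s - be)/al).
have Q : al*((s - be)/al)^+2 + 2*be*((s - be)/al) + ga = 0.
  apply: (mulfI al0); rewrite mulr0.
  transitivity (s^+2 - D); last by rewrite s2 subrr.
  rewrite /D; field; exact: al0.
rewrite -[RHS](mulr0 (a0*a1*a2)^-1) -Q /al /be /ga; field.
by rewrite -/al al0 n0 n1 n2.
Qed.

Lemma sumT3 (R : rcfType) (F : 'I_3 -> R) :
  \sum_(i in [set: 'I_3]) F i = F ord0 + F (lift ord0 ord0) + F (lift ord0 (lift ord0 ord0)).
Proof.
rewrite (eq_bigl predT) => [|j]; last by rewrite in_setT.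
by rewrite !big_ord_recl big_ord0 addr0 addrA.
Qed.

Lemma prodT3 (R : rcfType) (F : 'I_3 -> R) :
  \prod_(i in [set: 'I_3]) F i = F ord0 * F (lift ord0 ord0) * F (lift ord0 (lift ord0 ord0)).
Proof.
rewrite (eq_bigl predT) => [|j]; last by rewrite in_setT.
by rewrite !big_ord_recl big_ord0 mulr1 mulrA.
Qed.

Lemma sum3 (R : rcfType) (F : 'I_3 -> R) :
  \sum_(i < 3) F i = F ord0 + F (lift ord0 ord0) + F (lift ord0 (lift ord0 ord0)).
Proof. by rewrite !big_ord_recl big_ord0 addr0 addrA. Qed.

Lemma l3pos (R : rcfType) (a b : 'I_3 -> R)
  (ha : forall i, 0 < a i) (hb0 : forall i, b i != 0) :
  0 < sigmaI a b [set: 'I_3] -> no_nontriv_sol a b 1.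
Proof.
move=> hS [c [[i nz] hs]].
have E0 := hs 0%N isT; have E1 := hs 1%N isT.
rewrite sum3 in E0; rewrite sum3 in E1.
rewrite sigmaI_E // sumT3 prodT3 in hS.
set i2 := (lift ord0 (lift ord0 ord0) : 'I_3) in E0 E1 hS; set i1 := (lift ord0 ord0 : 'I_3) in E0 E1 hS.
have hS' : 0 < a ord0 * b i1 * b i2 + a i1 * b ord0 * b i2 + a i2 * b ord0 * b i1.
  move: hS; congr (0 < _); field.
  by rewrite !hb0.
have E0' : a ord0 * c ord0 + a i1 * c i1 + a i2 * c i2 = 0 by rewrite -[RHS]E0; ring.
have E1' : a ord0 * b ord0 * c ord0 ^+ 2 + a i1 * b i1 * c i1 ^+ 2 + a i2 * b i2 * c i2 ^+ 2 = 0
  by rewrite -[RHS]E1; ring.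
have [e0 e1 e2] := @alg3pos R _ _ _ _ _ _ _ _ _ (ha _) (ha _) (ha _) hS' E0' E1'.
have : \sum_(j < 3) c j ^+ 2 = 0.
  by rewrite sum3 -/i2 -/i1 e0 e1 e2 expr0n addr0 addr0.
move/psumr_eq0P => /(_ (fun j _ => sqr_ge0 (c j)) i isT) /eqP.
by rewrite sqrf_eq0 (negbTE nz).
Qed.

Lemma l3neg (R : rcfType) (a b : 'I_3 -> R)
  (ha : forall i, 0 < a i) (hb0 : forall i, b i != 0) :
  sigmaI a b [set ord0; lift ord0 (lift ord0 ord0)] != 0 ->
  sigmaI a b [set: 'I_3] < 0 -> ~ no_nontriv_sol a b 1.
Proof.
move=> h02 hS ns.
set i2 := (lift ord0 (lift ord0 ord0) : 'I_3) in h02 hS; set i1 := (lift ord0 ord0 : 'I_3) in h02 hS.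
rewrite sigmaI_E // sumT3 prodT3 -/i2 -/i1 in hS.
rewrite sigmaI_E // big_setU1 ?inE //= big_set1 big_setU1 ?inE //= big_set1 in h02.
have h02' : a ord0 * b i2 + a i2 * b ord0 != 0.
  move: h02; apply: contra => /eqP h; apply/eqP; rewrite -h.
  field. by rewrite !hb0.
have hS' : a ord0 * b i1 * b i2 + a i1 * b ord0 * b i2 + a i2 * b ord0 * b i1 < 0.
  move: hS; congr (_ < 0); field.
  by rewrite !hb0.
have [x hx] := @alg3neg R _ _ _ _ _ _ (ha _) (ha _) (ha _) h02' hS'.
apply: ns; exists (fun i : 'I_3 => nth 0 [:: x/a ord0; 1/a i1; -(x+1)/a i2] i).
split.
  exists i1 => /=; rewrite div1r invr_eq0 gt_eqF //.
case=> [|[|//]] _; rewrite sum3 -/i2 -/i1 /=.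
  field; by rewrite !gt_eqF.
by rewrite -[RHS]hx; ring.
Qed.

Theorem propositionF1 (R : rcfType) (l : nat) (a b : 'I_l -> R)
  (hl : (2 <= l)%N)
  (ha : forall i, 0 < a i)
  (hb0 : forall i, b i != 0)
  (hbinj : injective b)
  (hmix : exists i1 j1, i1 != j1 /\ b i1 * b j1 < 0) :
  ((forall I : {set 'I_l}, (2 <= #|I|)%N -> sigmaI a b I != 0) ->
     exists s, sbar a b = Some s /\ (s <= l.-1)%N)
  /\
  ((exists I : {set 'I_l}, (2 <= #|I|)%N /\ sigmaI a b I = 0) ->
     sbar a b = None)
  /\
  ((forall I : {set 'I_l}, (2 <= #|I|)%N -> sigmaI a b I != 0) ->
     (l = 2%N -> sbar a b = Some 1%N)
     /\ (l = 3%N -> 0 < sigmaI a b [set: 'I_l] -> sbar a b = Some 1%N)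
     /\ (l = 3%N -> sigmaI a b [set: 'I_l] < 0 -> sbar a b = Some 2%N)).
Proof.
have partA : (forall I : {set 'I_l}, (2 <= #|I|)%N -> sigmaI a b I != 0) ->
     exists s, sbar_spec a b (Some s) /\ (s <= l.-1)%N.
  move=> hyp; have ns := @noSol R l a b ha hb0 hyp.
  have l1 : (1 <= l.-1)%N by lia.
  have [m [hm [[m1 nm] mm]]] :=
    @min_ex (fun t => (1 <= t)%N /\ no_nontriv_sol a b t) l.-1 (conj l1 ns).
  exists m; split => //; split => //; split => // t t1 tm nt.
  exact: (mm t tm (conj t1 nt)).
split.
  move=> hyp; have [s [hs sl]] := partA hyp; exists s; split => //.
  exact: sbar_eq.
split.
  move=> [I [cI sI]]; apply: sbar_eq => s _ ns; apply: ns.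
  have [x [y [xI yI _]]] := card_gt1P cI.
  exists (fun i => if i \in I then (b i)^-1 else 0); split.
    by exists x; rewrite xI invr_eq0.
  move=> u _.
  rewrite (bigID (fun i => i \in I)) /= [X in _ + X]big1 ?addr0; last first.
    by move=> i /negbTE ->; rewrite exprS mul0r mulr0.
  have : \sum_(i in I) a i / b i = 0.
    have pn : \prod_(i in I) b i != 0 by apply/prodf_neq0 => i _.
    move: sI; rewrite sigmaI_E // => /eqP; rewrite mulf_eq0 (negbTE pn) /=.
    by move/eqP.
  move=> hz; rewrite -[RHS]hz; apply: eq_bigr => i ->.
  rewrite exprVn exprS.
  have bu : b i ^+ u != 0 by rewrite expf_neq0.
  move: bu; set z := b i ^+ u => bu.
  field; by rewrite bu hb0.
move=> hyp; have [s [[s1 [ns sm]] sl]] := partA hyp.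
split; [|split].
- move=> e2; subst l; rewrite (@sbar_eq R _ a b (Some s)); last by split.
  by congr Some; apply/eqP; rewrite eqn_leq s1 sl.
- move=> e3; subst l => hS; apply: sbar_eq; split => //; split.
    exact: l3pos.
  by move=> t t1 t2; move: t1 t2; case: t => [|[|]].
- move=> e3; subst l => hS; rewrite (@sbar_eq R _ a b (Some s)); last by split.
  congr Some; apply/eqP; rewrite eqn_leq sl /=.
  case: s s1 ns sm sl => [|[|s]] //= _ ns sm sl.
  exfalso; apply: (@l3neg R a b ha hb0 _ hS) => //.
  apply: hyp; by rewrite cards2.
Qed.
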